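(* Let $X,Y$ be mild $E\mathcal M$-simplicial sets. Then $X\boxtimes Y\subset X\times Y$ is a mild $E\mathcal M$-simplicial subset (for the diagonal action on $X\times Y$). Moreover, this construction is a simplicial subfunctor $E\mathcal M\text{-}\mathbf{SSet}^\mu\times E\mathcal M\text{-}\mathbf{SSet}^\mu\to E\mathcal M\text{-}\mathbf{SSet}^\mu$ of the cartesian product functor $E\mathcal M\text{-}\mathbf{SSet}^\mu\times E\mathcal M\text{-}\mathbf{SSet}^\mu\to E\mathcal M\text{-}\mathbf{SSet}$, and it preserves simplicial tensors in each variable, i.e.\ for every simplicial set $K$ the associativity isomorphism $K\times(X\times Y)\cong(K\times X)\times Y$ restricts to an isomorphism $K\times(X\boxtimes Y)\cong(K\times X)\boxtimes Y$, and similarly in the second variable.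
   Context: $\omega=\{1,2,\dots\}$, $\mathcal M$ the monoid of injections $\omega\to\omega$, $\mathcal M_A$ those fixing $A\subset\omega$ pointwise; $A$ co-infinite if $\omega\setminus A$ is infinite. $E\mathcal M$ is the simplicial monoid with $(E\mathcal M)_n=\mathcal M^{1+n}$, pointwise multiplication, structure maps by precomposition. $E\mathcal M\text{-}\mathbf{SSet}$ is the category of simplicial sets with left $E\mathcal M$-action. $x\in X_n$ is $k$-supported on $A$ if $i_k(u).x=x$ for all $u\in\mathcal M_A$ ($i_k$ inclusion of the $(1+k)$-th factor). $X$ is mild if every $x\in X_n$ is, for each $0\le k\le n$, $k$-supported on some co-infinite set; $E\mathcal M\text{-}\mathbf{SSet}^\mu$ is the full subcategory of mild objects. For simplicial sets $K$, $K\times X$ has $E\mathcal M$ acting on $X$ only. The box product $X\boxtimes Y$ of mild $X,Y$ consists in degree $n$ of all $(x,y)\in X_n\times Y_n$ such that for every $0\le k\le n$ there are $A_k,B_k\subset\omega$ with $A_k\cap B_k=\emptyset$ and $A_k\cup B_k$ co-infinite such that $x$ is $k$-supported on $A_k$ and $y$ is $k$-supported on $B_k$. *)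

(* Defs.v *)
From mathcomp Require Import all_boot.
From mathcomp Require Import boolp classical_sets cardinality.
Set Implicit Arguments. Unset Strict Implicit. Unset Printing Implicit Defensive.
Local Open Scope classical_set_scope.

Definition dmap (m n : nat) :=
  {f : 'I_m.+1 -> 'I_n.+1 | forall i j : 'I_m.+1, i <= j -> f i <= f j}.

Definition did (n : nat) : dmap n n := @exist _ (fun f : 'I_n.+1 -> 'I_n.+1 => forall i j : 'I_n.+1, i <= j -> f i <= f j) id (fun i j h => h).

Definition dcomp (m n p : nat) (g : dmap n p) (f : dmap m n) : dmap m p :=
  @exist _ (fun h : 'I_m.+1 -> 'I_p.+1 => forall i j : 'I_m.+1, i <= j -> h i <= h j)
        (fun i => proj1_sig g (proj1_sig f i))
        (fun i j h => proj2_sig g _ _ (proj2_sig f i j h)).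

Record sset := SSet {
  sob :> nat -> Type;
  sop : forall m n, dmap m n -> sob n -> sob m;
  sop_id : forall n (x : sob n), sop (did n) x = x;
  sop_comp : forall m n p (g : dmap n p) (f : dmap m n) (x : sob p),
      sop (dcomp g f) x = sop f (sop g x) }.
Arguments sop {s m n}.

(* omega = {1,2,...} is modelled by nat (any countably infinite set will do). *)
Record Inj := MkInj { ifun :> nat -> nat; ifun_inj : injective ifun }.

Definition inj_id : Inj := @MkInj id (fun x y h => h).
Definition inj_comp (u v : Inj) : Inj :=
  @MkInj (fun a => u (v a)) (fun a b h => @ifun_inj v a b (@ifun_inj u (v a) (v b) h)).

Definition fixes (A : set nat) (u : Inj) : Prop := forall a, A a -> u a = a.

Definition co_infinite (A : set nat) : Prop := ~ finite_set (~` A).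

(* (EM)_n = M^{1+n}, elements are functions 'I_n.+1 -> Inj *)
Definition em_one (n : nat) : 'I_n.+1 -> Inj := fun _ => inj_id.
Definition em_mul (n : nat) (u v : 'I_n.+1 -> Inj) : 'I_n.+1 -> Inj :=
  fun i => inj_comp (u i) (v i).
Definition em_op (m n : nat) (f : dmap m n) (u : 'I_n.+1 -> Inj) : 'I_m.+1 -> Inj :=
  fun i => u (proj1_sig f i).
Definition ik (n : nat) (k : 'I_n.+1) (u : Inj) : 'I_n.+1 -> Inj :=
  fun i => if i == k then u else inj_id.

Record emsset := EMSSet {
  ems :> sset;
  act : forall n, ('I_n.+1 -> Inj) -> ems n -> ems n;
  act_one : forall n (x : ems n), act (@em_one n) x = x;
  act_mul : forall n (u v : 'I_n.+1 -> Inj) (x : ems n),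
      act u (act v x) = act (em_mul u v) x;
  act_op : forall m n (f : dmap m n) (u : 'I_n.+1 -> Inj) (x : ems n),
      sop f (act u x) = act (em_op f u) (sop f x) }.
Arguments act {e n}.

Definition supported (X : emsset) (n : nat) (k : 'I_n.+1) (x : X n) (A : set nat) :=
  forall u, fixes A u -> act (ik k u) x = x.

Definition mild (X : emsset) : Prop :=
  forall n (x : X n) (k : 'I_n.+1), exists A, co_infinite A /\ supported k x A.

Record emmap (X Y : emsset) := EMMap {
  emf :> forall n, X n -> Y n;
  emf_op : forall m n (f : dmap m n) (x : X n), emf (sop f x) = sop f (emf x);
  emf_act : forall n (u : 'I_n.+1 -> Inj) (x : X n), emf (act u x) = act u (emf x) }.
Arguments emf {X Y} e {n}.

Section Prod.
Variables X Y : emsset.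
Definition prod_sop m n (f : dmap m n) (p : X n * Y n) : X m * Y m :=
  (sop f p.1, sop f p.2).
Lemma prod_sop_id n (p : X n * Y n) : prod_sop (did n) p = p.
Proof. by case: p => x y; rewrite /prod_sop /= !sop_id. Qed.
Lemma prod_sop_comp m n p (g : dmap n p) (f : dmap m n) (q : X p * Y p) :
  prod_sop (dcomp g f) q = prod_sop f (prod_sop g q).
Proof. by rewrite /prod_sop /= !sop_comp. Qed.
Definition prod_sset : sset := SSet prod_sop_id prod_sop_comp.
Definition prod_act n (u : 'I_n.+1 -> Inj) (p : prod_sset n) : prod_sset n :=
  (act u p.1, act u p.2).
Lemma prod_act_one n (p : prod_sset n) : prod_act (@em_one n) p = p.
Proof. by case: p => x y; rewrite /prod_act /= !act_one. Qed.
Lemma prod_act_mul n (u v : 'I_n.+1 -> Inj) (p : prod_sset n) :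
  prod_act u (prod_act v p) = prod_act (em_mul u v) p.
Proof. by rewrite /prod_act /= !act_mul. Qed.
Lemma prod_act_op m n (f : dmap m n) (u : 'I_n.+1 -> Inj) (p : prod_sset n) :
  prod_sop f (prod_act u p) = prod_act (em_op f u) (prod_sop f p).
Proof. by rewrite /prod_act /prod_sop /= !act_op. Qed.
Definition emprod : emsset := EMSSet prod_act_one prod_act_mul prod_act_op.
End Prod.

Section Tensor.
Variables (K : sset) (X : emsset).
Definition ten_sop m n (f : dmap m n) (p : K n * X n) : K m * X m :=
  (sop f p.1, sop f p.2).
Lemma ten_sop_id n (p : K n * X n) : ten_sop (did n) p = p.
Proof. by case: p => x y; rewrite /ten_sop /= !sop_id. Qed.
Lemma ten_sop_comp m n p (g : dmap n p) (f : dmap m n) (q : K p * X p) :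
  ten_sop (dcomp g f) q = ten_sop f (ten_sop g q).
Proof. by rewrite /ten_sop /= !sop_comp. Qed.
Definition ten_sset : sset := SSet ten_sop_id ten_sop_comp.
Definition ten_act n (u : 'I_n.+1 -> Inj) (p : ten_sset n) : ten_sset n :=
  (p.1, act u p.2).
Lemma ten_act_one n (p : ten_sset n) : ten_act (@em_one n) p = p.
Proof. by case: p => x y; rewrite /ten_act /= act_one. Qed.
Lemma ten_act_mul n (u v : 'I_n.+1 -> Inj) (p : ten_sset n) :
  ten_act u (ten_act v p) = ten_act (em_mul u v) p.
Proof. by rewrite /ten_act /= act_mul. Qed.
Lemma ten_act_op m n (f : dmap m n) (u : 'I_n.+1 -> Inj) (p : ten_sset n) :
  ten_sop f (ten_act u p) = ten_act (em_op f u) (ten_sop f p).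
Proof. by rewrite /ten_act /ten_sop /= act_op. Qed.
Definition emtensor : emsset := EMSSet ten_act_one ten_act_mul ten_act_op.
End Tensor.

Definition box (X Y : emsset) (n : nat) (p : emprod X Y n) : Prop :=
  forall k : 'I_n.+1, exists (A B : set nat),
    [/\ A `&` B = set0, co_infinite (A `|` B),
        supported k p.1 A & supported k p.2 B].

(* P is a mild EM-simplicial subset of Z: closed under simplicial operators
   and under the action, and the resulting EM-simplicial set is mild
   (the action being restricted, k-supports are computed in Z). *)
Definition mild_emsubset (Z : emsset) (P : forall n, Z n -> Prop) : Prop :=
  [/\ (forall m n (f : dmap m n) (z : Z n), P n z -> P m (sop f z)),
      (forall n (u : 'I_n.+1 -> Inj) (z : Z n), P n z -> P n (act u z)) &
      (forall n (z : Z n) (k : 'I_n.+1), P n z ->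
          exists A, co_infinite A /\ supported k z A)].

(* Main.v *)
Require Import Defs.
From mathcomp Require Import all_boot zify.
From mathcomp Require Import boolp classical_sets cardinality.
Set Implicit Arguments. Unset Strict Implicit. Unset Printing Implicit Defensive.
Local Open Scope classical_set_scope.

Definition unb (S : set nat) := forall n, exists m, n <= m /\ S m.

Fixpoint itr (ch : nat -> nat) (n : nat) : nat :=
  if n is n'.+1 then ch (itr ch n').+1 else ch 0.
Lemma unb_enum (S : set nat) : unb S ->
  exists e : nat -> nat, (forall n, S (e n)) /\ (forall n, n <= e n) /\ injective e.
Proof.
move=> h. have [ch hch] := choice h.
have inc : forall n, itr ch n < itr ch n.+1.
  move=> n. rewrite [itr ch n.+1]/=. by case: (hch (itr ch n).+1).
have lt : forall m n, m < n -> itr ch m < itr ch n.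
  move=> m n; elim: n => // n IH. rewrite ltnS leq_eqVlt => /orP [/eqP -> | /IH h'].
    exact: inc.
  exact: ltn_trans h' (inc n).
exists (itr ch); split.
  by case => [|n]; [case: (hch 0) | case: (hch (itr ch n).+1)].
split.
  elim => [|n IH]. exact: leq0n.
  have h2 := leq_ltn_trans IH (inc n). exact h2.
move=> m n emn; case: (ltngtP m n) => // hmn.
  by have := lt _ _ hmn; rewrite emn ltnn.
by have := lt _ _ hmn; rewrite emn ltnn.
Qed.


Lemma not_unb (S : set nat) : ~ unb S -> exists N, forall m, N <= m -> ~ S m.
Proof.
move=> h; apply: contrapT => hn; apply: h => n; apply: contrapT => hm; apply: hn.
exists n => m nm Sm; apply: hm; by exists m.
Qed.

Lemma sep (A : set nat) (p q : Inj) : unb (~` A) ->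
  exists X Y : set nat, [/\ unb X, unb Y, X `<=` ~`A, Y `<=` ~`A &
    (forall z, X z -> ~ Y z) /\ (forall x y, X x -> Y y -> p x <> q y)].
Proof.
move=> /unb_enum [e [eC [ege einj]]].
pose P i := fun y => exists n, y = e (3 * n + i).
have PC : forall i, P i `<=` ~` A by move=> i y [n ->]; exact: eC.
have Pu : forall i, unb (P i).
  move=> i k; exists (e (3 * k + i)); split; last by exists k.
  apply: leq_trans (ege _); lia.
have Pdis : forall i j y, i < 3 -> j < 3 -> P i y -> P j y -> i = j.
  move=> i j y hi hj [n ->] [m /einj hm]; lia.
pose Y j := fun y => P 2 y /\ ~ (exists x, P j x /\ p x = q y).
have YC : forall j, Y j `<=` ~` A by move=> j y [/PC].
have good : forall j, j < 2 -> unb (Y j) -> exists X Y : set nat, [/\ unb X, unb Y, X `<=` ~`A, Y `<=` ~`A &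
    (forall z, X z -> ~ Y z) /\ (forall x y, X x -> Y y -> p x <> q y)].
  move=> j hj hY; exists (P j), (Y j); split => //; split.
  - move=> z Pz [P2z _]; have := Pdis _ _ _ _ _ Pz P2z; lia.
  - move=> x y Px [_ hn] pq; apply: hn; exists x; by split.
case: (pselect (unb (Y 0))) => [h0|/not_unb [N0 h0]]; first exact: (good 0).
case: (pselect (unb (Y 1))) => [h1|/not_unb [N1 h1]]; first exact: (good 1).
have [m [hm P2m]] := Pu 2 (maxn N0 N1).
have /contrapT [x0 [Px0 e0]] : ~ ~ exists x, P 0 x /\ p x = q m.
  move=> hn; apply: (h0 m); [lia | by split].
have /contrapT [x1 [Px1 e1]] : ~ ~ exists x, P 1 x /\ p x = q m.
  move=> hn; apply: (h1 m); [lia | by split].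
have ex : x0 = x1 by apply: (@ifun_inj p); rewrite e0 e1.
subst x1; have := Pdis _ _ _ _ _ Px0 Px1; lia.
Qed.


Lemma core (A : set nat) (p q : Inj) : unb (~` A) -> (forall a, A a -> p a = q a) ->
  exists c c' g : Inj, [/\ fixes A c, fixes A c', (forall z, g (c z) = p (c z))
     & (forall z, g (c' z) = q (c' z))].
Proof.
move=> hA hpq.
have [X [Y [uX uY XC YC [XY pqXY]]]] := sep p q hA.
have [eX [eXX [_ eXi]]] := unb_enum uX.
have [eY [eYY [_ eYi]]] := unb_enum uY.
pose cf z := if pselect (A z) then z else eX z.
pose c'f z := if pselect (A z) then z else eY (2 * z).
pose gf z := if pselect (A z \/ X z) then p z
  else if pselect (exists w, z = eY (2 * w)) then q z else q (eY (2 * z + 1)).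
have pi := @ifun_inj p; have qi := @ifun_inj q.
have cI : injective cf.
  have nA : forall z, ~ A (eX z) by move=> z; apply: XC; apply: eXX.
  move=> a b; rewrite /cf; case: pselect => ha; case: pselect => hb /= //.
  - by move=> e; rewrite e in ha; case: (nA _ ha).
  - by move=> e; rewrite -e in hb; case: (nA _ hb).
  - exact: eXi.
have c'I : injective c'f.
  have nA : forall z, ~ A (eY z) by move=> z; apply: YC; apply: eYY.
  move=> a b; rewrite /c'f; case: pselect => ha; case: pselect => hb /= //.
  - by move=> e; rewrite e in ha; case: (nA _ ha).
  - by move=> e; rewrite -e in hb; case: (nA _ hb).
  - move/eYi; lia.
have gs : forall z, [\/ (A z \/ X z) /\ gf z = p z,
    [/\ ~ (A z \/ X z), (exists w, z = eY (2 * w)) & gf z = q z] |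
    [/\ ~ (A z \/ X z), ~ (exists w, z = eY (2 * w)) & gf z = q (eY (2 * z + 1))]].
  move=> z; rewrite /gf; case: pselect => h1 /=; first by constructor 1.
  case: pselect => h2 /=; first by constructor 2.
  by constructor 3.
have gI : injective gf.
  have c13 : forall a b, (A a \/ X a) -> p a <> q (eY b).
    move=> a b [ha|ha] e.
      rewrite hpq // in e; move/qi: e => e; subst a; exact: (YC _ (eYY _) ha).
    exact: (pqXY _ _ ha (eYY b)).
  move=> a b.
  case: (gs a) => [[ha ->]|[ha [w ew] ->]|[ha hw ->]];
  case: (gs b) => [[hb ->]|[hb [w' ew'] ->]|[hb hw' ->]].
  - exact: pi.
  - by rewrite ew' => e; case: (c13 _ _ ha e).
  - by move=> e; case: (c13 _ _ ha e).
  - by rewrite ew => e; case: (c13 _ _ hb (esym e)).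
  - exact: qi.
  - by move/qi; rewrite ew => /eYi; lia.
  - by move=> e; case: (c13 _ _ hb (esym e)).
  - by move/qi; rewrite ew' => /eYi; lia.
  - by move/qi/eYi; lia.
have cAX : forall z, A (cf z) \/ X (cf z).
  by move=> z; rewrite /cf; destruct (pselect (A z)) => /=; [left|right; apply: eXX].
exists (MkInj cI), (MkInj c'I), (MkInj gI); split => /=.
- by rewrite /fixes /= => a ha; rewrite /cf; destruct (pselect (A a)) => //=.
- by rewrite /fixes /= => a ha; rewrite /c'f; destruct (pselect (A a)) => //=.
- move=> z; case: (gs (cf z)) => [[_ ->]|[h _]|[h _]] //; by case: h; apply: cAX.
- move=> z; rewrite /c'f; destruct (pselect (A z)) as [h|h] => /=.
    case: (gs z) => [[_ ->]|[h' _]|[h' _]]; [exact: hpq | by case: h'; left | by case: h'; left].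
  case: (gs (eY (2 * z))) => [[h' _]|[_ _ ->]|[_ hw _]] //.
    case: h' => h'; first by case: (YC _ (eYY _) h').
    by case: (XY _ h' (eYY _)).
  by case: hw; exists z.
Qed.


Lemma inj_ext (u v : Inj) : (forall a, u a = v a) -> u = v.
Proof.
case: u v => f hf [g hg] /= e; have efg : f = g by apply: funext.
subst g; congr MkInj; exact: Prop_irrelevance.
Qed.

Lemma vec_ext n (u v : 'I_n.+1 -> Inj) : (forall i a, u i a = v i a) -> u = v.
Proof. by move=> h; apply: funext => i; apply: inj_ext; apply: h. Qed.

Lemma supp_agree (X : emsset) n (k : 'I_n.+1) (x : X n) A (a b : Inj) :
  unb (~` A) -> supported k x A -> (forall z, A z -> a z = b z) ->
  act (ik k a) x = act (ik k b) x.
Proof.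
move=> hA hx hab; have [c [c' [g [fc fc' hg hg']]]] := core hA hab.
have e1 : act (ik k a) x = act (ik k g) x.
  rewrite -{1}(hx c fc) act_mul -{2}(hx c fc) act_mul; congr act.
  apply: vec_ext => i z; rewrite /em_mul /ik /=; case: (i == k) => //=.
have e2 : act (ik k b) x = act (ik k g) x.
  rewrite -{1}(hx c' fc') act_mul -{2}(hx c' fc') act_mul; congr act.
  apply: vec_ext => i z; rewrite /em_mul /ik /=; case: (i == k) => //=.
by rewrite e1 e2.
Qed.

Lemma supp_op (X : emsset) m n (f : dmap m n) (k' : 'I_m.+1) (x : X n) A :
  unb (~` A) -> supported (proj1_sig f k') x A -> supported k' (sop f x) A.
Proof.
move=> hA hx u hu.
have hid : forall z, A z -> u z = z by exact: hu.
have [c [c' [g [fc fc' hg hg']]]] := @core A u Defs.inj_id hA hid.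
set k := proj1_sig f k' in hx.
have e1 : act (ik k' u) (sop f x) = act (ik k' g) (sop f x).
  rewrite -{1}(hx c fc) act_op act_mul -{2}(hx c fc) act_op act_mul; congr act.
  apply: vec_ext => i z; rewrite /em_mul /em_op /ik /=.
  case: eqP => [->|] //=; by rewrite eqxx.
have e2 : act (ik k' g) (sop f x) = sop f x.
  rewrite -{1}(hx c' fc') act_op act_mul -{2}(hx c' fc') act_op; congr act.
  apply: vec_ext => i z; rewrite /em_mul /em_op /ik /=.
  case: eqP => [->|] //=; rewrite eqxx /=; exact: hg'.
by rewrite e1 e2.
Qed.

Lemma supp_act (X : emsset) n (k : 'I_n.+1) (x : X n) A (p : 'I_n.+1 -> Inj) :
  unb (~` A) -> supported k x A -> supported k (act p x) (p k @` A).
Proof.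
move=> hA hx v hv.
pose ph i := if i == k then Defs.inj_id else p i.
have e1 : em_mul (ik k v) p = em_mul ph (ik k (Defs.inj_comp v (p k))).
  apply: vec_ext => i z; rewrite /em_mul /ik /ph /=; case: eqP => [->|] //=.
have e2 : p = em_mul ph (ik k (p k)).
  apply: vec_ext => i z; rewrite /em_mul /ik /ph /=; case: eqP => [->|] //=.
rewrite act_mul e1 -act_mul (@supp_agree _ _ _ _ A _ (p k)) //.
  by rewrite act_mul -e2.
move=> z Az /=; apply: hv; by exists z.
Qed.

Lemma infinite_unb (S : set nat) : ~ finite_set S -> unb S.
Proof.
move=> hS n; apply: contrapT => hn; apply: hS.
apply: (sub_finite_set _ (finite_II n)) => m Sm /=.
rewrite ltnNge; apply/negP => le; apply: hn; by exists m.
Qed.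

Lemma unb_sub (S T : set nat) : S `<=` T -> unb S -> unb T.
Proof. move=> ST h n; have [m [? ?]] := h n; exists m; split => //; exact: ST. Qed.

Lemma coinf_unb (A B : set nat) : co_infinite (A `|` B) -> unb (~` A).
Proof.
move=> /infinite_unb; apply: unb_sub => z hz hA; apply: hz; by left.
Qed.


Lemma ten_supp (K : sset) (X : emsset) n (k' : 'I_n.+1) (k : K n) (x : X n) A :
  @supported (emtensor K X) n k' ((k, x) : emtensor K X n) A <-> supported k' x A.
Proof.
split => h u hu.
  by have := h u hu; case.
by rewrite /= /ten_act /= h.
Qed.

Lemma image_coinf (A B : set nat) (u : Inj) : co_infinite (A `|` B) ->
  co_infinite (u @` A `|` u @` B).
Proof.
move=> hco hfin; apply: hco.
have sub : u @` (~` (A `|` B)) `<=` ~` (u @` A `|` u @` B).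
  move=> z [w hw <-] [[a Aa /ifun_inj ea]|[b Bb /ifun_inj eb]]; apply: hw.
    by left; rewrite -ea.
  by right; rewrite -eb.
have := sub_finite_set sub hfin.
by rewrite (eq_finite_set (inj_card_eq (in2W (@ifun_inj u)))).
Qed.

Lemma image_disj (A B : set nat) (u : Inj) : A `&` B = set0 ->
  u @` A `&` u @` B = set0.
Proof.
move=> hAB; apply/seteqP; split => [z [[a Aa <-] [b Bb /ifun_inj eb]]|z []] //.
have : (A `&` B) a by split => //; rewrite -eb.
by rewrite hAB.
Qed.

Theorem proposition2p17 :
  (forall X Y : emsset, mild X -> mild Y ->
      @mild_emsubset (emprod X Y) (@box X Y)) /\
  (forall (K : sset) (X Y X' Y' : emsset),
      mild X -> mild Y -> mild X' -> mild Y' ->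
      forall (f : emmap (emtensor K X) X') (g : emmap (emtensor K Y) Y')
             (n : nat) (k : K n) (x : X n) (y : Y n),
        @box X Y n (x, y) ->
        @box X' Y' n (@emf _ _ f n ((k, x) : emtensor K X n),
                      @emf _ _ g n ((k, y) : emtensor K Y n))) /\
  (forall (K : sset) (X Y : emsset), mild X -> mild Y ->
      forall (n : nat) (k : K n) (x : X n) (y : Y n),
        (@box X Y n (x, y) <->
         @box (emtensor K X) Y n ((k, x) : emtensor K X n, y)) /\
        (@box X Y n (x, y) <->
         @box X (emtensor K Y) n (x, (k, y) : emtensor K Y n))).
Proof.
split; [|split].
- move=> X Y _ _; split.
  + move=> m n f [x y] hb k'.
    have [A [B [hAB hco hx hy]]] := hb (proj1_sig f k').
    exists A, B; split => //.
      exact: (supp_op (coinf_unb hco) hx).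
    rewrite setUC in hco; exact: (supp_op (coinf_unb hco) hy).
  + move=> n u [x y] hb k.
    have [A [B [hAB hco hx hy]]] := hb k.
    exists (u k @` A), (u k @` B); split.
    * exact: image_disj.
    * exact: image_coinf.
    * exact: (@supp_act X n k x A u (coinf_unb hco) hx).
    * rewrite setUC in hco; exact: (@supp_act Y n k y B u (coinf_unb hco) hy).
  + move=> n [x y] k hb.
    have [A [B [hAB hco hx hy]]] := hb k.
    exists (A `|` B); split => // v hv /=.
    rewrite /prod_act /= hx ?hy // => z hz; apply: hv; [by right | by left].
- move=> K X Y X' Y' _ _ _ _ f g n k x y hb k'.
  have [A [B [hAB hco hx hy]]] := hb k'.
  exists A, B; split => // u hu.
    by rewrite -emf_act /= /ten_act /= hx.
  by rewrite -emf_act /= /ten_act /= hy.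
- move=> K X Y _ _ n k x y; split; split => hb k';
  have [A [B [hAB hco hx hy]]] := hb k'; exists A, B; split => //.
  + by apply/ten_supp.
  + by move/ten_supp: hx.
  + by apply/ten_supp.
  + by move/ten_supp: hy.
Qed.
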